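(* There exists a constant $C>0$ depending only on $h$ such that for all $\delta\in(-1,1)$ and all $x\in[0,1]^2$, $$|\Psi_\delta(x)-x|\le C|\delta|\,\tilde d(x),$$ where $\tilde d(x)$ denotes the distance from $x$ to the set of corners of $[0,1]^2$.
   Context: Fix a function $h:[0,\tfrac12)\to[0,\infty)$ which is weakly increasing, satisfies $h(r)=0$ for all $r\le\frac1{10}$, $h(r)\to\infty$ as $r\to\frac12$, and is thrice continuously differentiable with $(h'(r))^2=O((r+h(r))^3)$, $h''(r)h'(r)=O((r+h(r))^3)$, $h'''(r)=O((r+h(r))^2)$. Let $r_0\in(0,\frac12)$ be the unique solution of $2r_0h(r_0)+r_0^2=\frac14$, and define $\Theta(r)=\arccos\frac{h(r)}{h(r)+r}$ for $r\le r_0$ and $\Theta(r)=\arcsin\frac{1}{2(h(r)+r)}$ for $r>r_0$. The map $(r,\theta)\mapsto(x_1,x_2)$, $x_1=\frac12+(r+h(r))\sin(\theta\Theta(r))$, $x_2=(r+h(r))\cos(\theta\Theta(r))-h(r)$, is a bijection from $(0,\frac12)\times[-1,1]$ onto $[0,1]\times[0,\frac12)\setminus\{(\frac12,0)\}$; let $K$ denote its inverse. For $\delta\in(-1,1)$ and $r\in(0,\frac12)$, let $w_r(\theta)=1+h'(r)-h'(r)\cos(\theta\Theta(r))$ and let $g_r=g_{r,\delta}:[-1,1]\to[-1,1]$ be the unique increasing bijection with $(1+\delta)\int_{-1}^{\ell}w_r(\theta)\,d\theta=\int_{-1}^{g_r(\ell)}w_r(\theta)\,d\theta$ for $\ell\in[-1,0]$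 and $(1-\delta)\int_{\ell}^{1}w_r(\theta)\,d\theta=\int_{g_r(\ell)}^{1}w_r(\theta)\,d\theta$ for $\ell\in[0,1]$. Define $\Psi_\delta:[0,1]^2\to[0,1]^2$ by: $\Psi_\delta(x)=K^{-1}(r,g_r(\theta))$ where $(r,\theta)=K(x)$, for $x\in[0,1]\times[0,\frac12)\setminus\{(\frac12,0)\}$; $\Psi_\delta(\frac12,0)=(\frac12,0)$; for $x_2>\frac12$, $\Psi_\delta(x_1,x_2)=(\Psi^1_\delta(x_1,1-x_2),\,1-\Psi^2_\delta(x_1,1-x_2))$ where $\Psi_\delta=(\Psi^1_\delta,\Psi^2_\delta)$; and on $x_2=\frac12$, $\Psi_\delta(x_1,\frac12)=((1+\delta)x_1,\frac12)$ for $x_1\le\frac12$ and $\Psi_\delta(x_1,\frac12)=(\frac{1+\delta}2+(1-\delta)(x_1-\frac12),\frac12)$ for $x_1\ge\frac12$. *)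

(* Defs.v *)
From Stdlib Require Import Reals Lra ClassicalEpsilon.
Open Scope R_scope.

(* Riemann integral of f over [a,b] (0 if not integrable; the value of
   RiemannInt does not depend on the integrability proof). *)
Definition Rint (f : R -> R) (a b : R) : R :=
  match excluded_middle_informative (inhabited (Riemann_integrable f a b)) with
  | left H => RiemannInt (epsilon H (fun _ => True))
  | right _ => 0
  end.

Definition r0 (h : R -> R) : R :=
  epsilon (inhabits 0)
    (fun r => 0 < r < 1/2 /\ 2 * r * h r + r ^ 2 = 1/4).

Definition Theta (h : R -> R) (r : R) : R :=
  if Rle_dec r (r0 h) then acos (h r / (h r + r))
  else asin (1 / (2 * (h r + r))).

Definition Phi (h : R -> R) (p : R * R) : R * R :=
  let r := fst p in let th := snd p in
  (1/2 + (r + h r) * sin (th * Theta h r),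
   (r + h r) * cos (th * Theta h r) - h r).

Definition K (h : R -> R) (x : R * R) : R * R :=
  epsilon (inhabits (0, 0))
    (fun p => 0 < fst p < 1/2 /\ -1 <= snd p <= 1 /\ Phi h p = x).

(* weight w_r(theta) = 1 + h'(r) - h'(r) cos(theta Theta(r)); h1 = h' *)
Definition w (h h1 : R -> R) (r th : R) : R :=
  1 + h1 r - h1 r * cos (th * Theta h r).

Definition g (h h1 : R -> R) (delta r l : R) : R :=
  epsilon (inhabits 0)
    (fun m => -1 <= m <= 1 /\
      (l <= 0 -> (1 + delta) * Rint (w h h1 r) (-1) l = Rint (w h h1 r) (-1) m) /\
      (0 <= l -> (1 - delta) * Rint (w h h1 r) l 1 = Rint (w h h1 r) m 1)).

Definition PsiL (h h1 : R -> R) (delta : R) (x : R * R) : R * R :=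
  if Req_EM_T (fst x) (1/2) then
    (if Req_EM_T (snd x) 0 then (1/2, 0)
     else let p := K h x in Phi h (fst p, g h h1 delta (fst p) (snd p)))
  else let p := K h x in Phi h (fst p, g h h1 delta (fst p) (snd p)).

Definition Psi (h h1 : R -> R) (delta : R) (x : R * R) : R * R :=
  let x1 := fst x in let x2 := snd x in
  if Req_EM_T x2 (1/2) then
    (if Rle_dec x1 (1/2) then ((1 + delta) * x1, 1/2)
     else ((1 + delta) / 2 + (1 - delta) * (x1 - 1/2), 1/2))
  else if Rlt_dec (1/2) x2 then
    let y := PsiL h h1 delta (x1, 1 - x2) in (fst y, 1 - snd y)
  else PsiL h h1 delta x.

Definition dist2 (x y : R * R) : R :=
  sqrt ((fst x - fst y) ^ 2 + (snd x - snd y) ^ 2).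

Definition dcorner (x : R * R) : R :=
  Rmin (Rmin (dist2 x (0,0)) (dist2 x (1,0)))
       (Rmin (dist2 x (0,1)) (dist2 x (1,1))).

(* Main.v *)
Require Import Defs.
From Stdlib Require Import Reals Lra Psatz ClassicalEpsilon.
From Coquelicot Require Import Coquelicot.
Open Scope R_scope.


Lemma sin_le_id_nonneg : forall a, 0 <= a -> sin a <= a.
Proof.
  intros a Ha. destruct (Req_dec a 0) as [->|Hn]. rewrite sin_0; lra.
  destruct (MVT_cor2 sin cos 0 a ltac:(lra) (fun c _ => derivable_pt_lim_sin c))
    as [c [Hc _]].
  rewrite sin_0 in Hc. pose proof (COS_bound c). nra.
Qed.

Lemma Rabs_sin_le : forall a, Rabs (sin a) <= Rabs a.
Proof.
  intros a.
  assert (Hg: forall b, 0 <= b -> Rabs (sin b) <= b).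
  { intros b Hb. destruct (Rle_lt_dec b 1).
    - assert (HP: 1 < PI) by (pose proof PI2_1; lra).
      pose proof (sin_ge_0 b Hb ltac:(lra)).
      rewrite Rabs_right by lra. apply sin_le_id_nonneg; lra.
    - pose proof (SIN_bound b). apply Rabs_le. lra. }
  destruct (Rle_lt_dec 0 a).
  - rewrite (Rabs_right a) by lra. apply Hg; lra.
  - rewrite (Rabs_left a) by lra. rewrite <- Rabs_Ropp, <- sin_neg. apply Hg; lra.
Qed.

Lemma one_minus_cos_le : forall y, 1 - cos y <= y^2/2.
Proof.
  intros y. replace y with (2*(y/2)) at 1 by field.
  rewrite cos_2a_sin.
  pose proof (Rabs_sin_le (y/2)).
  assert (Rabs (sin (y/2)) * Rabs (sin (y/2)) <= Rabs (y/2) * Rabs (y/2)).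
  { apply Rmult_le_compat; try apply Rabs_pos; lra. }
  rewrite <- !Rabs_mult in H0.
  rewrite !Rabs_right in H0 by (apply Rle_ge; nra). nra.
Qed.

Lemma cos_ge : forall y, 1 - y^2/2 <= cos y.
Proof. intros; pose proof (one_minus_cos_le y); lra. Qed.

Lemma sin_ge_half : forall u, 0 <= u <= 1 -> u/2 <= sin u.
Proof.
  intros u [H0 H1]. destruct (Req_dec u 0) as [->|Hn]. rewrite sin_0; lra.
  destruct (MVT_cor2 sin cos 0 u ltac:(lra) (fun c _ => derivable_pt_lim_sin c))
    as [c [Hc Hc2]].
  rewrite sin_0 in Hc. pose proof (cos_ge c). nra.
Qed.

Lemma sin_ge_quarter : forall y, 0 <= y <= 2 -> y/4 <= sin y.
Proof.
  intros y [H0 H2].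
  replace y with (2*(y/2)) by field. rewrite sin_2a.
  pose proof (sin_ge_half (y/2) ltac:(lra)).
  pose proof (cos_ge (y/2)).
  assert (1/2 <= cos (y/2)) by nra. nra.
Qed.

Lemma dist2_nonneg : forall a b, 0 <= dist2 a b.
Proof. intros; unfold dist2; apply sqrt_pos. Qed.

Lemma dist2_le : forall a b X, 0 <= X ->
  (fst a - fst b)^2 + (snd a - snd b)^2 <= X^2 -> dist2 a b <= X.
Proof.
  intros a b X HX H. unfold dist2.
  rewrite <- (sqrt_pow2 X HX). apply sqrt_le_1_alt. exact H.
Qed.

Lemma dist2_ge : forall a b Y,
  Y^2 <= (fst a - fst b)^2 + (snd a - snd b)^2 -> Y <= dist2 a b.
Proof.
  intros a b Y H. unfold dist2. destruct (Rle_lt_dec Y 0).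
  - pose proof (sqrt_pos ((fst a - fst b)^2 + (snd a - snd b)^2)). lra.
  - rewrite <- (sqrt_pow2 Y) by lra. apply sqrt_le_1_alt. exact H.
Qed.

Lemma dist2_sq : forall a b, (dist2 a b)^2 = (fst a - fst b)^2 + (snd a - snd b)^2.
Proof.
  intros. unfold dist2. rewrite <- Rsqr_pow2. apply Rsqr_sqrt. apply Rplus_le_le_0_compat; apply pow2_ge_0.
Qed.

Lemma dist2_sym : forall a b, dist2 a b = dist2 b a.
Proof. intros; unfold dist2; f_equal; ring. Qed.

Lemma dist2_tri : forall a b c, dist2 a c <= dist2 a b + dist2 b c.
Proof.
  intros [a1 a2] [b1 b2] [c1 c2].
  pose proof (dist2_sq (a1,a2) (b1,b2)). pose proof (dist2_sq (b1,b2) (c1,c2)).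
  pose proof (dist2_nonneg (a1,a2) (b1,b2)). pose proof (dist2_nonneg (b1,b2) (c1,c2)).
  cbn [fst snd] in *.
  set (u := dist2 (a1,a2) (b1,b2)) in *. set (v := dist2 (b1,b2) (c1,c2)) in *.
  apply dist2_le. lra. cbn [fst snd].
  (* Cauchy-Schwarz *)
  assert (Hcs: (a1-b1)*(b1-c1) + (a2-b2)*(b2-c2) <= u*v).
  { destruct (Rle_lt_dec ((a1-b1)*(b1-c1) + (a2-b2)*(b2-c2)) 0). nra.
    apply Rsqr_incr_0_var. 2: nra. unfold Rsqr.
    replace (u*v*(u*v)) with ((u^2)*(v^2)) by ring. rewrite H, H0.
    assert (0 <= ((a1-b1)*(b2-c2) - (a2-b2)*(b1-c1))^2) by apply pow2_ge_0. nra. }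
  replace (a1 - c1) with ((a1-b1)+(b1-c1)) by ring.
  replace (a2 - c2) with ((a2-b2)+(b2-c2)) by ring. nra.
Qed.

Lemma dcorner_nonneg : forall x, 0 <= dcorner x.
Proof.
  intros. unfold dcorner. pose proof (dist2_nonneg x (0,0)).
  pose proof (dist2_nonneg x (1,0)). pose proof (dist2_nonneg x (0,1)).
  pose proof (dist2_nonneg x (1,1)).
  unfold Rmin; repeat destruct Rle_dec; lra.
Qed.

Lemma dcorner_ge : forall x Y,
  Y <= dist2 x (0,0) -> Y <= dist2 x (1,0) -> Y <= dist2 x (0,1) -> Y <= dist2 x (1,1) ->
  Y <= dcorner x.
Proof.
  intros. unfold dcorner. unfold Rmin; repeat destruct Rle_dec; lra.
Qed.

Lemma dcorner_le : forall x Y,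
  dcorner x <= Y ->
  (dist2 x (0,0) <= Y \/ dist2 x (1,0) <= Y \/ dist2 x (0,1) <= Y \/ dist2 x (1,1) <= Y).
Proof.
  intros. unfold dcorner in H. unfold Rmin in H; repeat destruct Rle_dec; lra.
Qed.

Lemma dcorner_flip1 : forall x1 x2, dcorner (1 - x1, x2) = dcorner (x1, x2).
Proof.
  intros. unfold dcorner.
  replace (dist2 (1-x1,x2) (0,0)) with (dist2 (x1,x2) (1,0)) by (unfold dist2; simpl; f_equal; ring).
  replace (dist2 (1-x1,x2) (1,0)) with (dist2 (x1,x2) (0,0)) by (unfold dist2; simpl; f_equal; ring).
  replace (dist2 (1-x1,x2) (0,1)) with (dist2 (x1,x2) (1,1)) by (unfold dist2; simpl; f_equal; ring).
  replace (dist2 (1-x1,x2) (1,1)) with (dist2 (x1,x2) (0,1)) by (unfold dist2; simpl; f_equal; ring).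
  rewrite (Rmin_comm (dist2 (x1,x2) (1,0))), (Rmin_comm (dist2 (x1,x2) (1,1))). reflexivity.
Qed.

Lemma dcorner_flip2 : forall x1 x2, dcorner (x1, 1 - x2) = dcorner (x1, x2).
Proof.
  intros. unfold dcorner.
  replace (dist2 (x1,1-x2) (0,0)) with (dist2 (x1,x2) (0,1)) by (unfold dist2; simpl; f_equal; ring).
  replace (dist2 (x1,1-x2) (1,0)) with (dist2 (x1,x2) (1,1)) by (unfold dist2; simpl; f_equal; ring).
  replace (dist2 (x1,1-x2) (0,1)) with (dist2 (x1,x2) (0,0)) by (unfold dist2; simpl; f_equal; ring).
  replace (dist2 (x1,1-x2) (1,1)) with (dist2 (x1,x2) (1,0)) by (unfold dist2; simpl; f_equal; ring).
  apply Rmin_comm.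
Qed.

Record HH (h h1 : R -> R) : Prop := {
  Hnonneg : forall r, 0 <= r < 1/2 -> 0 <= h r;
  Hmono : forall r s, 0 <= r -> r <= s -> s < 1/2 -> h r <= h s;
  Hzero : forall r, 0 <= r <= 1/10 -> h r = 0;
  Hinf : forall M, exists eps, 0 < eps /\ forall r, 1/2 - eps < r < 1/2 -> M < h r;
  Hd1 : forall r, 0 < r < 1/2 -> derivable_pt_lim h r (h1 r);
  HO1 : exists M, forall r, 0 < r < 1/2 -> (h1 r) ^ 2 <= M * (r + h r) ^ 3 }.

Lemma cont_of_ex_derive : forall f x, ex_derive f x -> continuity_pt f x.
Proof.
  intros f x H. apply continuity_pt_filterlim. apply (ex_derive_continuous f x H).
Qed.

Lemma h_ex_derive : forall h h1, HH h h1 -> forall r, 0 < r < 1/2 -> ex_derive h r.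
Proof.
  intros h h1 H r Hr. exists (h1 r). apply is_derive_Reals. apply (Hd1 _ _ H r Hr).
Qed.

Lemma h1_nonneg : forall h h1, HH h h1 -> forall r, 0 < r < 1/2 -> 0 <= h1 r.
Proof.
  intros h h1 H r Hr. destruct (Rle_lt_dec 0 (h1 r)) as [|Hneg]; [assumption|].
  exfalso. pose proof (Hd1 _ _ H r Hr) as D.
  destruct (D (- h1 r / 2) ltac:(lra)) as [del Hdel].
  set (k := Rmin (del/2) ((1/2 - r)/2)).
  assert (Hk: 0 < k). { unfold k. apply Rmin_pos. pose proof (cond_pos del). lra. lra. }
  assert (Hk1: k <= del/2) by apply Rmin_l.
  assert (Hk2: k <= (1/2-r)/2) by apply Rmin_r.
  assert (Habs: Rabs k < del). { rewrite Rabs_right by lra. pose proof (cond_pos del). lra. }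
  specialize (Hdel k ltac:(lra) Habs).
  assert (Hm: h r <= h (r + k)) by (apply (Hmono _ _ H); lra).
  assert (0 <= (h (r + k) - h r) / k).
  { apply Rdiv_le_0_compat; lra. }
  apply Rabs_lt_between in Hdel. lra.
Qed.

Definition qf (h : R -> R) (r : R) := 2 * r * h r + r ^ 2.

Lemma qf_strict : forall h h1, HH h h1 -> forall r s, 0 <= r -> r < s -> s < 1/2 -> qf h r < qf h s.
Proof.
  intros h h1 H r s H0 H1 H2. unfold qf.
  pose proof (Hmono _ _ H r s H0 ltac:(lra) H2).
  pose proof (Hnonneg _ _ H r ltac:(lra)). nra.
Qed.

Lemma r0_exists : forall h h1, HH h h1 ->
  exists r, 0 < r < 1/2 /\ 2 * r * h r + r ^ 2 = 1/4.
Proof.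
  intros h h1 H.
  destruct (Hinf _ _ H 1) as [eps [He Hr]].
  set (r2 := Rmax (3/8) (1/2 - eps/2)).
  assert (Hr2a : 3/8 <= r2) by apply Rmax_l.
  assert (Hr2b : 1/2 - eps/2 <= r2) by apply Rmax_r.
  assert (Hr2c : r2 < 1/2). { unfold r2. apply Rmax_lub_lt; lra. }
  assert (Hh2 : 1 < h r2) by (apply Hr; lra).
  destruct (Ranalysis5.IVT_interv (fun r => 2 * r * h r + r ^ 2 - 1/4) (1/10) r2) as [z [Hz Hz2]].
  - intros a Ha. apply cont_of_ex_derive. auto_derive.
    apply (h_ex_derive h h1 H); lra.
  - lra.
  - rewrite (Hzero _ _ H) by lra. lra.
  - nra.
  - exists z. split; [lra|]. lra.
Qed.

Lemma r0_spec : forall h h1, HH h h1 ->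
  0 < r0 h < 1/2 /\ 2 * r0 h * h (r0 h) + (r0 h) ^ 2 = 1/4.
Proof.
  intros h h1 H. unfold r0.
  apply (epsilon_spec (inhabits 0) (fun r => 0 < r < 1/2 /\ 2 * r * h r + r ^ 2 = 1/4)).
  apply (r0_exists h h1 H).
Qed.

Lemma h_r0_pos : forall h h1, HH h h1 -> 0 < h (r0 h).
Proof.
  intros h h1 H. destruct (r0_spec h h1 H) as [Hr Hq]. nra.
Qed.

Lemma le_r0_q : forall h h1, HH h h1 -> forall r, 0 < r -> r <= r0 h -> qf h r <= 1/4.
Proof.
  intros h h1 H r Hr Hle. destruct (r0_spec h h1 H) as [Hr0 Hq].
  destruct (Req_dec r (r0 h)) as [->|Hn]. unfold qf; lra.
  pose proof (qf_strict h h1 H r (r0 h) ltac:(lra) ltac:(lra) ltac:(lra)). unfold qf in *. lra.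
Qed.

Lemma gt_r0_q : forall h h1, HH h h1 -> forall r, r0 h < r -> r < 1/2 -> 1/4 < qf h r.
Proof.
  intros h h1 H r Hle Hr. destruct (r0_spec h h1 H) as [Hr0 Hq].
  pose proof (qf_strict h h1 H (r0 h) r ltac:(lra) ltac:(lra) ltac:(lra)). unfold qf in *. lra.
Qed.

Lemma acos_le_pi2 : forall y, 0 <= y <= 1 -> acos y <= PI/2.
Proof.
  intros y Hy. destruct (Rle_lt_dec (acos y) (PI/2)) as [|Hlt]; [assumption|].
  pose proof (acos_bound y). pose proof (cos_acos y ltac:(lra)).
  pose proof PI_RGT_0.
  assert (cos (acos y) < 0) by (apply cos_lt_0; lra). lra.
Qed.

Lemma Theta_le_case : forall h h1, HH h h1 -> forall r, 0 < r < 1/2 -> r <= r0 h ->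
  Theta h r = acos (h r / (h r + r)) /\
  (r + h r) * cos (Theta h r) = h r /\
  ((r + h r) * sin (Theta h r))^2 = qf h r /\ 0 <= sin (Theta h r) /\
  0 < Theta h r <= PI/2.
Proof.
  intros h h1 H r Hr Hle.
  assert (HT: Theta h r = acos (h r / (h r + r))).
  { unfold Theta. destruct (Rle_dec r (r0 h)); [reflexivity| lra]. }
  pose proof (Hnonneg _ _ H r ltac:(lra)) as Hh.
  set (y := h r / (h r + r)) in *.
  assert (Hy: 0 <= y < 1).
  { unfold y. split. apply Rdiv_le_0_compat; lra.
    apply Rmult_lt_reg_r with (h r + r). lra. field_simplify; lra. }
  pose proof (cos_acos y ltac:(lra)) as Hc.
  pose proof (sin_acos y ltac:(lra)) as Hs.
  pose proof (acos_bound y).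
  pose proof (acos_le_pi2 y ltac:(lra)).
  rewrite HT. split; [reflexivity|]. split.
  { rewrite Hc. unfold y. field. lra. }
  split.
  { rewrite Hs. rewrite Rpow_mult_distr. rewrite <- Rsqr_pow2 with (x := sqrt _).
    rewrite Rsqr_sqrt. unfold y, qf, Rsqr. field. lra.
    unfold Rsqr. nra. }
  split.
  { rewrite Hs. apply sqrt_pos. }
  split; [|lra].
  destruct (Rle_lt_dec (acos y) 0); [|lra].
  assert (acos y = 0) by lra. rewrite H2 in Hc. rewrite cos_0 in Hc. lra.
Qed.

Lemma Theta_gt_case : forall h h1, HH h h1 -> forall r, r0 h < r < 1/2 ->
  Theta h r = asin (1 / (2 * (h r + r))) /\
  (r + h r) * sin (Theta h r) = 1/2 /\
  ((r + h r) * cos (Theta h r))^2 = (r + h r)^2 - 1/4 /\ 0 <= cos (Theta h r) /\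
  1/2 < r + h r /\
  0 < Theta h r <= PI/2.
Proof.
  intros h h1 H r Hr.
  destruct (r0_spec h h1 H) as [Hr0 _].
  assert (HT: Theta h r = asin (1 / (2 * (h r + r)))).
  { unfold Theta. destruct (Rle_dec r (r0 h)); [lra| reflexivity]. }
  pose proof (Hnonneg _ _ H r ltac:(lra)) as Hh.
  pose proof (gt_r0_q h h1 H r ltac:(lra) ltac:(lra)) as Hq. unfold qf in Hq.
  assert (Hrho: 1/2 < r + h r) by nra.
  set (y := 1 / (2 * (h r + r))) in *.
  assert (Hy: 0 < y < 1).
  { unfold y. split. apply Rdiv_lt_0_compat; lra.
    apply Rmult_lt_reg_r with (2*(h r + r)). lra. field_simplify; lra. }
  pose proof (sin_asin y ltac:(lra)) as Hs.
  pose proof (cos_asin y ltac:(lra)) as Hc.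
  pose proof (asin_bound y).
  rewrite HT. split; [reflexivity|]. split.
  { rewrite Hs. unfold y. field. lra. }
  split.
  { rewrite Hc. rewrite Rpow_mult_distr. rewrite <- Rsqr_pow2 with (x := sqrt _).
    rewrite Rsqr_sqrt. unfold y, Rsqr. field. lra.
    unfold Rsqr. nra. }
  split.
  { rewrite Hc. apply sqrt_pos. }
  split; [lra|].
  split; [|lra].
  destruct (Rle_lt_dec (asin y) 0); [|lra].
  assert (sin (asin y) <= 0).
  { destruct (Req_dec (asin y) 0) as [E|E]. rewrite E, sin_0; lra.
    apply Rlt_le. rewrite <- (Ropp_involutive (asin y)). rewrite sin_neg.
    apply Ropp_lt_gt_0_contravar. apply sin_gt_0; pose proof PI_RGT_0; lra. }
  lra.
Qed.

Lemma Theta_bounds : forall h h1, HH h h1 -> forall r, 0 < r < 1/2 ->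
  0 < Theta h r <= PI/2.
Proof.
  intros h h1 H r Hr. destruct (Rle_lt_dec r (r0 h)).
  - apply (Theta_le_case h h1 H r Hr r0).
  - apply (Theta_gt_case h h1 H r ltac:(lra)).
Qed.

Lemma Theta_le2 : forall h h1, HH h h1 -> forall r, 0 < r < 1/2 -> Theta h r <= 2.
Proof.
  intros. pose proof (Theta_bounds h h1 H r H0). pose proof PI_4. lra.
Qed.

Lemma chord_id : forall p a b,
  (p * sin a - p * sin b)^2 + (p * cos a - p * cos b)^2 = 2 * p^2 * (1 - cos (a - b)).
Proof.
  intros. rewrite cos_minus.
  pose proof (sin2_cos2 a). pose proof (sin2_cos2 b). unfold Rsqr in *. nra.
Qed.

Lemma Phi_fst : forall h r t, fst (Phi h (r,t)) = 1/2 + (r + h r) * sin (t * Theta h r).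
Proof. reflexivity. Qed.
Lemma Phi_snd : forall h r t, snd (Phi h (r,t)) = (r + h r) * cos (t * Theta h r) - h r.
Proof. reflexivity. Qed.

Lemma dist_Phi_same_r : forall h r m t, 0 <= r + h r -> 0 <= Theta h r ->
  dist2 (Phi h (r,m)) (Phi h (r,t)) <= (r + h r) * Theta h r * Rabs (m - t).
Proof.
  intros h r m t Hp HT. apply dist2_le.
  apply Rmult_le_pos; [apply Rmult_le_pos; auto| apply Rabs_pos].
  rewrite !Phi_fst, !Phi_snd.
  replace (1 / 2 + (r + h r) * sin (m * Theta h r) - (1 / 2 + (r + h r) * sin (t * Theta h r)))
    with ((r + h r) * sin (m * Theta h r) - (r + h r) * sin (t * Theta h r)) by ring.
  replace ((r + h r) * cos (m * Theta h r) - h r - ((r + h r) * cos (t * Theta h r) - h r))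
    with ((r + h r) * cos (m * Theta h r) - (r + h r) * cos (t * Theta h r)) by ring.
  rewrite chord_id.
  pose proof (one_minus_cos_le (m * Theta h r - t * Theta h r)).
  replace (((r + h r) * Theta h r * Rabs (m - t)) ^ 2)
    with ((r + h r)^2 * (Theta h r * (m - t))^2).
  2:{ rewrite !Rpow_mult_distr. rewrite pow2_abs. ring. }
  replace (m * Theta h r - t * Theta h r) with (Theta h r * (m - t)) in H by ring.
  assert (0 <= (r + h r)^2) by apply pow2_ge_0.
  set (y := Theta h r * (m - t)) in *. set (P := (r + h r)^2) in *.
  replace (m * Theta h r - t * Theta h r) with y by (unfold y; ring).
  apply Rmult_le_compat_l with (r := P) in H; [|exact H0]. lra.
Qed.

Lemma chord_lower : forall h h1, HH h h1 -> forall r t, 0 < r < 1/2 -> -1 <= t <= 0 ->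
  (r + h r) * Theta h r * (1 + t) / 2 <= dist2 (Phi h (r,t)) (Phi h (r,-1)).
Proof.
  intros h h1 H r t Hr Ht. apply dist2_ge.
  pose proof (Theta_bounds h h1 H r Hr) as [HT1 HT2].
  pose proof (Theta_le2 h h1 H r Hr) as HT3.
  pose proof (Hnonneg _ _ H r ltac:(lra)).
  rewrite !Phi_fst, !Phi_snd.
  replace (1 / 2 + (r + h r) * sin (t * Theta h r) - (1 / 2 + (r + h r) * sin (-1 * Theta h r)))
    with ((r + h r) * sin (t * Theta h r) - (r + h r) * sin (-1 * Theta h r)) by ring.
  replace ((r + h r) * cos (t * Theta h r) - h r - ((r + h r) * cos (-1 * Theta h r) - h r))
    with ((r + h r) * cos (t * Theta h r) - (r + h r) * cos (-1 * Theta h r)) by ring.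
  rewrite chord_id.
  replace (t * Theta h r - -1 * Theta h r) with (2 * ((Theta h r * (1 + t))/2)) by field.
  rewrite cos_2a_sin.
  assert (Hph: 0 <= Theta h r * (1 + t) <= 2) by nra.
  pose proof (sin_ge_half ((Theta h r * (1 + t))/2) ltac:(lra)) as Hs.
  set (phi := Theta h r * (1 + t)) in *.
  set (S := sin (phi/2)) in *.
  replace ((r + h r) * Theta h r * (1 + t) / 2) with ((r + h r) * phi / 2) by (unfold phi; field).
  assert (0 <= phi/4) by lra.
  assert (phi/4 * (phi/4) <= S * S) by (apply Rmult_le_compat; lra).
  assert (0 <= (r + h r)^2) by apply pow2_ge_0.
  set (P := r + h r) in *.
  replace ((P * phi / 2)^2) with (P^2 * (4 * (phi/4 * (phi/4)))) by field.
  replace (2 * P ^ 2 * (1 - (1 - 2 * S * S))) with (P^2 * (4 * (S * S))) by ring.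
  apply Rmult_le_compat_l; lra.
Qed.

Definition Hr0v (h : R -> R) := h (r0 h).
Definition rho0 h := r0 h + Hr0v h.
Definition C1 h := 4 * (Hr0v h + 1) + 2 + 1 / Hr0v h.
Definition Bc h := 2 * rho0 h + 2.
Definition Cc h := 2 * Bc h + 2 * (1 + C1 h).

Definition sO (h : R -> R) (r : R) := dist2 (1/2, - h r) (0,0).

Lemma sO_sq : forall h r, (sO h r)^2 = 1/4 + (h r)^2.
Proof. intros. unfold sO. rewrite dist2_sq. cbn [fst snd]. field. Qed.

Lemma dist_center : forall h r t, 0 <= r + h r ->
  dist2 (Phi h (r,t)) (1/2, - h r) = r + h r.
Proof.
  intros h r t Hp. unfold dist2. rewrite Phi_fst, Phi_snd. cbn [fst snd].
  replace ((1 / 2 + (r + h r) * sin (t * Theta h r) - 1 / 2) ^ 2 +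
     ((r + h r) * cos (t * Theta h r) - h r - - h r) ^ 2) with ((r + h r)^2).
  apply sqrt_pow2; lra.
  pose proof (sin2_cos2 (t * Theta h r)). unfold Rsqr in *.
  set (a := sin (t * Theta h r)) in *. set (b := cos (t * Theta h r)) in *.
  replace (1 / 2 + (r + h r) * a - 1 / 2) with ((r + h r) * a) by field.
  replace ((r + h r) * b - h r - - h r) with ((r + h r) * b) by ring.
  replace ((r + h r)^2) with ((r + h r)^2 * (a * a + b * b)) by (rewrite H; ring). ring.
Qed.

Lemma x_lower : forall h r t, 0 <= r + h r ->
  Rabs (r + h r - sO h r) <= dist2 (Phi h (r,t)) (0,0).
Proof.
  intros h r t Hp.
  pose proof (dist_center h r t Hp) as Ha.
  pose proof (dist2_tri (Phi h (r,t)) (0,0) (1/2, - h r)) as Hb.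
  pose proof (dist2_tri (1/2, - h r) (Phi h (r,t)) (0,0)) as Hc.
  pose proof (dist2_sym (0,0) (1/2, - h r)). pose proof (dist2_sym (1/2, - h r) (Phi h (r,t))).
  unfold sO. apply Rabs_le. lra.
Qed.

Lemma E_bound : forall h h1, HH h h1 -> forall r, 0 < r < 1/2 ->
  dist2 (Phi h (r,-1)) (0,0) <= C1 h * Rabs (r + h r - sO h r).
Proof.
  intros h h1 H r Hr.
  pose proof (h_r0_pos h h1 H) as HH0. fold (Hr0v h) in HH0.
  destruct (r0_spec h h1 H) as [Hr0 _].
  pose proof (Hnonneg _ _ H r ltac:(lra)) as Hh.
  pose proof (sO_sq h r) as Hs2.
  assert (Hs0 : 0 <= sO h r) by apply dist2_nonneg.
  set (s := sO h r) in *.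
  assert (HC1 : 4 * (Hr0v h + 1) + 2 <= C1 h).
  { unfold C1. assert (0 < 1 / Hr0v h) by (apply Rdiv_lt_0_compat; lra). lra. }
  apply dist2_le.
  { apply Rmult_le_pos. lra. apply Rabs_pos. }
  rewrite Phi_fst, Phi_snd. cbn [fst snd].
  replace (-1 * Theta h r) with (- Theta h r) by ring.
  rewrite sin_neg, cos_neg.
  destruct (Rle_lt_dec r (r0 h)) as [Hle|Hgt].
  - destruct (Theta_le_case h h1 H r Hr Hle) as (_ & Hc & Hs & Hsp & _).
    pose proof (le_r0_q h h1 H r ltac:(lra) Hle) as Hq.
    assert (HhH : h r <= Hr0v h) by (apply (Hmono _ _ H); lra).
    set (S := (r + h r) * sin (Theta h r)) in *.
    assert (HS0 : 0 <= S) by (unfold S; apply Rmult_le_pos; lra).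
    rewrite Hc.
    replace (1 / 2 + (r + h r) * - sin (Theta h r) - 0) with (1/2 - S) by (unfold S; ring).
    assert (HS1: S <= 1/2) by (unfold qf in *; nra).
    assert (Hrs : r + h r <= s) by (unfold qf in *; nra).
    rewrite Rabs_left1 by lra.
    assert (Hs1 : s <= Hr0v h + 1/2) by nra.
    assert (Hk: (1/2 - S) * (1/2) <= (s - (r + h r)) * (s + (r + h r))).
    { unfold qf in *. nra. }
    assert (Hk2: 1/2 - S <= 4 * (Hr0v h + 1) * (s - (r + h r))) by nra.
    assert (Hk3: 1/2 - S <= C1 h * (- (r + h r - s))) by nra.
    replace (h r - h r - 0) with 0 by ring.
    nra.
  - destruct (Theta_gt_case h h1 H r ltac:(lra)) as (_ & Hs & Hc & Hcp & Hrho & _).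
    pose proof (gt_r0_q h h1 H r ltac:(lra) ltac:(lra)) as Hq.
    assert (HhH : Hr0v h <= h r) by (apply (Hmono _ _ H); lra).
    set (T := (r + h r) * cos (Theta h r)) in *.
    assert (HT0 : 0 <= T) by (unfold T; apply Rmult_le_pos; lra).
    replace (1 / 2 + (r + h r) * - sin (Theta h r) - 0) with 0 by lra.
    replace (T - h r - 0) with (T - h r) by ring.
    assert (HTh : h r <= T) by (unfold qf in *; nra).
    assert (Hrs : s <= r + h r) by (unfold qf in *; nra).
    rewrite Rabs_right by lra.
    assert (Hk: (T - h r) * h r <= (r + h r - s) * (1 + 2 * h r)).
    { assert ((T - h r) * (T + h r) = (r + h r - s) * (r + h r + s)) by (unfold qf in *; nra).
      nra. }
    assert (Hk2 : T - h r <= (r + h r - s) * (1 / h r + 2)).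
    { apply Rmult_le_reg_r with (h r). lra.
      replace ((r + h r - s) * (1 / h r + 2) * h r) with ((r + h r - s) * (1 + 2 * h r)) by (field; lra).
      lra. }
    assert (Hk3 : 1 / h r <= 1 / Hr0v h).
    { apply Rmult_le_reg_r with (h r * Hr0v h). nra. field_simplify; lra. }
    assert (Hk4 : T - h r <= C1 h * (r + h r - s)).
    { unfold C1. nra. }
    assert (0 <= T - h r) by lra. nra.
Qed.

Lemma rhoTheta_le : forall h h1, HH h h1 -> forall r, 0 < r < 1/2 ->
  (r + h r) * Theta h r <= Bc h.
Proof.
  intros h h1 H r Hr.
  pose proof (Hnonneg _ _ H r ltac:(lra)) as Hh.
  pose proof (h_r0_pos h h1 H) as HH0.
  destruct (r0_spec h h1 H) as [Hr0 _].
  pose proof (Theta_bounds h h1 H r Hr) as [T1 T2].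
  pose proof (Theta_le2 h h1 H r Hr) as T3.
  unfold Bc, rho0, Hr0v in *.
  destruct (Rle_lt_dec r (r0 h)) as [Hle|Hgt].
  - assert (h r <= h (r0 h)) by (apply (Hmono _ _ H); lra). nra.
  - destruct (Theta_gt_case h h1 H r ltac:(lra)) as (_ & Hs & _).
    pose proof (sin_ge_quarter (Theta h r) ltac:(lra)).
    assert ((r + h r) * (Theta h r / 4) <= 1/2).
    { rewrite <- Hs. apply Rmult_le_compat_l; lra. }
    nra.
Qed.

Lemma Bc_pos : forall h h1, HH h h1 -> 0 < Bc h.
Proof.
  intros h h1 H. pose proof (h_r0_pos h h1 H) as Hp. destruct (r0_spec h h1 H) as [Hr0 _].
  unfold Bc, rho0, Hr0v in *. lra.
Qed.

Lemma C1_pos : forall h h1, HH h h1 -> 0 < C1 h.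
Proof.
  intros h h1 H. pose proof (h_r0_pos h h1 H) as Hp. unfold C1, Hr0v in *.
  assert (0 < 1 / h (r0 h)) by (apply Rdiv_lt_0_compat; lra). lra.
Qed.

Lemma corner_bound : forall h h1, HH h h1 -> forall r t, 0 < r < 1/2 -> -1 <= t <= 0 ->
  (r + h r) * Theta h r * (1 + t) <= Cc h * dcorner (Phi h (r,t)).
Proof.
  intros h h1 H r t Hr Ht.
  pose proof (Hnonneg _ _ H r ltac:(lra)) as Hh.
  pose proof (Theta_bounds h h1 H r Hr) as [T1 T2].
  pose proof (rhoTheta_le h h1 H r Hr) as HB.
  pose proof (Bc_pos h h1 H) as HBp. pose proof (C1_pos h h1 H) as HC1p.
  assert (HCc: 0 < Cc h) by (unfold Cc; lra).
  set (L := (r + h r) * Theta h r * (1 + t)).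
  assert (HL0 : 0 <= L) by (unfold L; apply Rmult_le_pos; [apply Rmult_le_pos|]; lra).
  assert (HLB : L <= Bc h).
  { unfold L. assert (0 <= (r + h r) * Theta h r) by (apply Rmult_le_pos; lra). nra. }
  set (x := Phi h (r,t)).
  assert (Hx1 : fst x <= 1/2).
  { unfold x. rewrite Phi_fst.
    assert (sin (t * Theta h r) <= 0).
    { replace (t * Theta h r) with (- (- t * Theta h r)) by ring. rewrite sin_neg.
      assert (0 <= sin (- t * Theta h r)) by (apply sin_ge_0; nra). lra. }
    nra. }
  assert (Hx2 : snd x <= 1/2).
  { unfold x. rewrite Phi_snd. pose proof (COS_bound (t * Theta h r)). nra. }
  assert (Hfar : forall c, fst c = 1 \/ snd c = 1 -> 1/2 <= dist2 x c).
  { intros c [Hc|Hc]; apply dist2_ge; rewrite Hc;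
    pose proof (pow2_ge_0 (fst x - fst c)); pose proof (pow2_ge_0 (snd x - snd c)); nra. }
  assert (Hnear : L <= 2 * (1 + C1 h) * dist2 x (0,0)).
  { pose proof (chord_lower h h1 H r t Hr Ht) as Hch. fold x in Hch.
    pose proof (dist2_tri x (0,0) (Phi h (r,-1))) as Htri.
    rewrite (dist2_sym (0,0)) in Htri.
    pose proof (E_bound h h1 H r Hr) as HE.
    pose proof (x_lower h r t ltac:(lra)) as Hxl. fold x in Hxl.
    assert (dist2 (Phi h (r, -1)) (0, 0) <= C1 h * dist2 x (0,0)).
    { eapply Rle_trans; [exact HE|]. apply Rmult_le_compat_l; lra. }
    unfold L in *. lra. }
  assert (Hd : L / Cc h <= dcorner x).
  { apply dcorner_ge.
    - apply Rmult_le_reg_r with (Cc h); [lra|]. unfold Rdiv. rewrite Rmult_assoc, Rinv_l by lra.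
      unfold Cc. pose proof (dist2_nonneg x (0,0)). nra.
    - apply Rmult_le_reg_r with (Cc h); [lra|]. unfold Rdiv. rewrite Rmult_assoc, Rinv_l by lra.
      pose proof (Hfar (1,0) (or_introl eq_refl)). unfold Cc. nra.
    - apply Rmult_le_reg_r with (Cc h); [lra|]. unfold Rdiv. rewrite Rmult_assoc, Rinv_l by lra.
      pose proof (Hfar (0,1) (or_intror eq_refl)). unfold Cc. nra.
    - apply Rmult_le_reg_r with (Cc h); [lra|]. unfold Rdiv. rewrite Rmult_assoc, Rinv_l by lra.
      pose proof (Hfar (1,1) (or_intror eq_refl)). unfold Cc. nra. }
  apply Rmult_le_compat_l with (r := Cc h) in Hd; [|lra].
  replace (Cc h * (L / Cc h)) with L in Hd by (field; lra). exact Hd.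
Qed.

Lemma Phi_flip : forall h r t, Phi h (r, -t) = (1 - fst (Phi h (r,t)), snd (Phi h (r,t))).
Proof.
  intros. unfold Phi. cbn [fst snd].
  replace (- t * Theta h r) with (- (t * Theta h r)) by ring.
  rewrite sin_neg, cos_neg. f_equal. field.
Qed.

Lemma corner_bound_sym : forall h h1, HH h h1 -> forall r t, 0 < r < 1/2 -> -1 <= t <= 1 ->
  (r + h r) * Theta h r * (1 - Rabs t) <= Cc h * dcorner (Phi h (r,t)).
Proof.
  intros h h1 H r t Hr Ht. destruct (Rle_lt_dec t 0).
  - rewrite Rabs_left1 by lra. replace (1 - - t) with (1 + t) by ring.
    apply (corner_bound h h1 H); lra.
  - rewrite Rabs_right by lra.
    pose proof (corner_bound h h1 H r (-t) Hr ltac:(lra)) as Hc.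
    rewrite Phi_flip in Hc. destruct (Phi h (r,t)) as [a b] eqn:E. cbn [fst snd] in Hc.
    rewrite dcorner_flip1 in Hc. replace (1 - t) with (1 + - t) by ring. exact Hc.
Qed.

Definition Wc (h : R -> R) (M : R) := 1 + 2 * (1 + M * (rho0 h)^3) + 2 * (1 + 2 * M).

Lemma w_lower : forall h h1, HH h h1 -> forall r t, 0 < r < 1/2 -> 1 <= w h h1 r t.
Proof.
  intros h h1 H r t Hr. unfold w. pose proof (h1_nonneg h h1 H r Hr).
  pose proof (COS_bound (t * Theta h r)). nra.
Qed.

Lemma w_upper : forall h h1, HH h h1 -> forall M, 0 <= M ->
  (forall r, 0 < r < 1/2 -> (h1 r) ^ 2 <= M * (r + h r) ^ 3) ->
  forall r t, 0 < r < 1/2 -> -1 <= t <= 1 -> w h h1 r t <= Wc h M.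
Proof.
  intros h h1 H M HM HO r t Hr Ht. unfold w, Wc.
  pose proof (h1_nonneg h h1 H r Hr) as Hh1.
  pose proof (one_minus_cos_le (t * Theta h r)) as Hc.
  pose proof (Theta_bounds h h1 H r Hr) as [T1 T2].
  pose proof (Theta_le2 h h1 H r Hr) as T3.
  pose proof (Hnonneg _ _ H r ltac:(lra)) as Hh.
  pose proof (HO r Hr) as HOr.
  assert (Ht2 : (t * Theta h r)^2 <= (Theta h r)^2).
  { rewrite Rpow_mult_distr. assert (t^2 <= 1) by nra. assert (0 <= Theta h r ^2) by nra. nra. }
  assert (Hk : h1 r * (1 - cos (t * Theta h r)) <= h1 r * (Theta h r)^2 / 2).
  { apply Rle_trans with (h1 r * ((t * Theta h r)^2/2)). apply Rmult_le_compat_l; lra.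
    nra. }
  assert (HM1 : 0 <= M * rho0 h ^ 3).
  { destruct (r0_spec h h1 H) as [Ha Hb]. pose proof (h_r0_pos h h1 H) as Hc'. unfold rho0, Hr0v in *.
    apply Rmult_le_pos; [lra|]. apply pow_le. lra. }
  destruct (Rle_lt_dec r (r0 h)) as [Hle|Hgt].
  - assert (Hrho : r + h r <= rho0 h).
    { unfold rho0, Hr0v. assert (h r <= h (r0 h)) by (apply (Hmono _ _ H); destruct (r0_spec h h1 H) as [Ha Hb]; lra). lra. }
    assert (Hr3 : (r + h r)^3 <= (rho0 h)^3) by (apply pow_incr; lra).
    assert (h1 r ^ 2 <= M * rho0 h ^ 3) by (eapply Rle_trans; [exact HOr| apply Rmult_le_compat_l; lra]).
    assert (h1 r <= 1 + M * rho0 h ^ 3) by (pose proof (pow2_ge_0 (h1 r - 1/2)); nra).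
    assert (HT4 : (Theta h r)^2 <= 4) by nra.
    assert (h1 r * (Theta h r)^2 <= h1 r * 4) by (apply Rmult_le_compat_l; lra).
    nra.
  - destruct (Theta_gt_case h h1 H r ltac:(lra)) as (_ & Hs & _ & _ & Hrho & _).
    pose proof (sin_ge_quarter (Theta h r) ltac:(lra)).
    assert (HrT : (r + h r) * Theta h r <= 2).
    { assert ((r + h r) * (Theta h r / 4) <= 1/2). rewrite <- Hs. apply Rmult_le_compat_l; lra. lra. }
    set (p := r + h r) in *.
    set (u := h1 r / p^2).
    assert (Hu2 : u^2 <= 2 * M).
    { unfold u. replace ((h1 r / p^2)^2) with (h1 r ^2 / p^4) by (field; lra).
      apply Rmult_le_reg_r with (p^4). apply pow_lt; lra.
      replace (h1 r ^ 2 / p ^ 4 * p ^ 4) with (h1 r ^2) by (field; lra).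
      eapply Rle_trans; [exact HOr|]. 
      replace (p^4) with (p * p^3) by ring. assert (0 <= p^3) by (apply pow_le; lra). nra. }
    assert (Hu : u <= 1 + 2 * M) by (pose proof (pow2_ge_0 (u - 1/2)); nra).
    assert (Heq : h1 r * (Theta h r)^2 / 2 = u * (p * Theta h r)^2 / 2) by (unfold u; field; lra).
    assert (0 <= u) by (unfold u; apply Rdiv_le_0_compat; [lra| apply pow_lt; lra]).
    assert (0 <= p * Theta h r) by (apply Rmult_le_pos; lra).
    assert ((p * Theta h r)^2 <= 4) by nra.
    assert (u * (p * Theta h r)^2 / 2 <= 2 * (1 + 2 * M)) by nra.
    nra.
Qed.

Lemma w_cont : forall h h1 r t, continuous (w h h1 r) t.
Proof.
  intros. apply (ex_derive_continuous (K:=R_AbsRing) (V:=R_NormedModule)). unfold w. auto_derive. tauto.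
Qed.

Lemma w_exRInt : forall h h1 r a b, ex_RInt (w h h1 r) a b.
Proof. intros. apply (ex_RInt_continuous (V:=R_CompleteNormedModule)). intros; apply w_cont. Qed.

Lemma Rint_RInt : forall h h1 r a b, a <= b -> Rint (w h h1 r) a b = RInt (w h h1 r) a b.
Proof.
  intros h h1 r a b Hab. unfold Rint.
  destruct (excluded_middle_informative _) as [Hi|Hn].
  - rewrite (RInt_Reals _ _ _ (epsilon Hi (fun _ => True))). reflexivity.
  - exfalso. apply Hn. constructor. apply continuity_implies_RiemannInt; [exact Hab|].
    intros x _. apply continuity_pt_filterlim. apply w_cont.
Qed.

Lemma chasles : forall h h1 r a b c,
  RInt (w h h1 r) a b + RInt (w h h1 r) b c = RInt (w h h1 r) a c.
Proof.
  intros. pose proof (RInt_Chasles (w h h1 r) a b c (w_exRInt _ _ _ _ _) (w_exRInt _ _ _ _ _)).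
  exact H.
Qed.

Lemma RInt_swap' : forall h h1 r a b, RInt (w h h1 r) b a = - RInt (w h h1 r) a b.
Proof.
  intros. rewrite <- (opp_RInt_swap (w h h1 r) a b (w_exRInt _ _ _ _ _)). reflexivity.
Qed.

Lemma RInt_bounds_le : forall h h1, HH h h1 -> forall M, 0 <= M ->
  (forall r, 0 < r < 1/2 -> (h1 r) ^ 2 <= M * (r + h r) ^ 3) ->
  forall r a b, 0 < r < 1/2 -> -1 <= a -> a <= b -> b <= 1 ->
  b - a <= RInt (w h h1 r) a b <= Wc h M * (b - a).
Proof.
  intros h h1 H M HM HO r a b Hr Ha Hab Hb. split.
  - rewrite <- (Rmult_1_r (b - a)). 
    replace ((b - a) * 1) with (RInt (fun _ => 1) a b).
    2:{ rewrite RInt_const. reflexivity. }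
    apply RInt_le; auto. apply ex_RInt_const. apply w_exRInt.
    intros x Hx. apply (w_lower h h1 H); auto.
  - replace (Wc h M * (b - a)) with (RInt (fun _ => Wc h M) a b).
    2:{ rewrite RInt_const. unfold scal; simpl. unfold mult; simpl. ring. }
    apply RInt_le; auto. apply w_exRInt. apply ex_RInt_const.
    intros x Hx. apply (w_upper h h1 H M HM HO); auto; lra.
Qed.

Lemma RInt_bounds_abs : forall h h1, HH h h1 -> forall M, 0 <= M ->
  (forall r, 0 < r < 1/2 -> (h1 r) ^ 2 <= M * (r + h r) ^ 3) ->
  forall r a b, 0 < r < 1/2 -> -1 <= a <= 1 -> -1 <= b <= 1 ->
  Rabs (b - a) <= Rabs (RInt (w h h1 r) a b) /\
  Rabs (RInt (w h h1 r) a b) <= Wc h M * Rabs (b - a).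
Proof.
  intros h h1 H M HM HO r a b Hr Ha Hb.
  destruct (Rle_lt_dec a b).
  - pose proof (RInt_bounds_le h h1 H M HM HO r a b Hr ltac:(lra) r0 ltac:(lra)).
    rewrite !Rabs_right by lra. lra.
  - pose proof (RInt_bounds_le h h1 H M HM HO r b a Hr ltac:(lra) ltac:(lra) ltac:(lra)).
    rewrite RInt_swap'. rewrite Rabs_Ropp. rewrite (Rabs_right (RInt _ b a)) by lra.
    rewrite (Rabs_left (b - a)) by lra. lra.
Qed.

Definition gspec h h1 delta r l m :=
  -1 <= m <= 1 /\
      (l <= 0 -> (1 + delta) * Rint (w h h1 r) (-1) l = Rint (w h h1 r) (-1) m) /\
      (0 <= l -> (1 - delta) * Rint (w h h1 r) l 1 = Rint (w h h1 r) m 1).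

Lemma Wc_pos : forall h h1, HH h h1 -> forall M, 0 <= M -> 1 <= Wc h M.
Proof.
  intros h h1 H M HM. unfold Wc.
  destruct (r0_spec h h1 H) as [Ha Hb]. pose proof (h_r0_pos h h1 H) as Hc.
  assert (0 <= M * rho0 h ^ 3). { apply Rmult_le_pos; [lra|]. apply pow_le. unfold rho0, Hr0v. lra. }
  lra.
Qed.

Lemma g_step : forall h h1, HH h h1 -> forall M, 0 <= M ->
  (forall r, 0 < r < 1/2 -> (h1 r) ^ 2 <= M * (r + h r) ^ 3) ->
  forall delta r t m, 0 < r < 1/2 -> -1 <= t <= 1 -> gspec h h1 delta r t m ->
  Rabs (m - t) <= Rabs delta * Wc h M * (1 - Rabs t).
Proof.
  intros h h1 H M HM HO delta r t m Hr Ht [Hm [G1 G2]].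
  pose proof (Wc_pos h h1 H M HM) as HW.
  pose proof (RInt_bounds_abs h h1 H M HM HO r t m Hr Ht Hm) as [B1 _].
  destruct (Rle_lt_dec t 0).
  - specialize (G1 r0). rewrite !Rint_RInt in G1 by lra.
    pose proof (chasles h h1 r (-1) t m) as Ch.
    assert (E : RInt (w h h1 r) t m = delta * RInt (w h h1 r) (-1) t) by lra.
    pose proof (RInt_bounds_abs h h1 H M HM HO r (-1) t Hr ltac:(lra) Ht) as [_ B2].
    rewrite E, Rabs_mult in B1.
    rewrite Rabs_left1 with (a := t) by lra.
    replace (t - -1) with (1 + t) in B2 by ring.
    rewrite (Rabs_right (1 + t)) in B2 by lra.
    replace (1 - - t) with (1 + t) by ring.
    eapply Rle_trans; [exact B1|].
    rewrite Rmult_assoc. apply Rmult_le_compat_l; [apply Rabs_pos| exact B2].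
  - specialize (G2 ltac:(lra)). rewrite !Rint_RInt in G2 by lra.
    pose proof (chasles h h1 r t m 1) as Ch.
    assert (E : RInt (w h h1 r) t m = delta * RInt (w h h1 r) t 1) by lra.
    pose proof (RInt_bounds_abs h h1 H M HM HO r t 1 Hr Ht ltac:(lra)) as [_ B2].
    rewrite E, Rabs_mult in B1.
    rewrite Rabs_right with (r := t) by lra.
    rewrite (Rabs_right (1 - t)) in B2 by lra.
    eapply Rle_trans; [exact B1|].
    rewrite Rmult_assoc. apply Rmult_le_compat_l; [apply Rabs_pos| exact B2].
Qed.

Lemma F_cont : forall h h1 r, continuity (fun u => RInt (w h h1 r) (-1) u).
Proof.
  intros h h1 r x. apply cont_of_ex_derive. exists (w h h1 r x).
  apply (is_derive_RInt (V:=R_NormedModule) (w h h1 r) (fun u => RInt (w h h1 r) (-1) u) (-1) x).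
  - apply filter_forall. intros y. apply (RInt_correct (V:=R_CompleteNormedModule)). apply w_exRInt.
  - apply w_cont.
Qed.

Lemma w_even : forall h h1 r y, w h h1 r (- y) = w h h1 r y.
Proof. intros. unfold w. replace (- y * Theta h r) with (- (y * Theta h r)) by ring. rewrite cos_neg. ring. Qed.

Lemma RInt_even : forall h h1 r, RInt (w h h1 r) (-1) 0 = RInt (w h h1 r) 0 1.
Proof.
  intros h h1 r.
  pose proof (RInt_correct (V:=R_CompleteNormedModule) (w h h1 r) (-0) (-1) (w_exRInt _ _ _ _ _)) as H1.
  pose proof (is_RInt_comp_opp (V:=R_NormedModule) (w h h1 r) 0 1 _ H1) as H2.
  assert (H3 : is_RInt (fun y => - w h h1 r y) 0 1 (RInt (w h h1 r) (-0) (-1))).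
  { apply (is_RInt_ext (V:=R_NormedModule) (fun y => opp (w h h1 r (- y)))); [|exact H2].
    intros x _. rewrite w_even. reflexivity. }
  apply (is_RInt_unique (V:=R_CompleteNormedModule)) in H3.
  rewrite (RInt_opp (V:=R_CompleteNormedModule)) in H3 by apply w_exRInt.
  replace (-0) with 0 in H3 by ring.
  rewrite RInt_swap' in H3. change (opp (- RInt (w h h1 r) 1 0)) with (- - RInt (w h h1 r) 1 0) in H3.
  pose proof (RInt_swap' h h1 r 0 1). pose proof (RInt_swap' h h1 r (-1) 0). lra.
Qed.

Lemma g_exists : forall h h1, HH h h1 -> forall M, 0 <= M ->
  (forall r, 0 < r < 1/2 -> (h1 r) ^ 2 <= M * (r + h r) ^ 3) ->
  forall delta r t, -1 < delta < 1 -> 0 < r < 1/2 -> -1 <= t <= 1 ->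
  exists m, gspec h h1 delta r t m.
Proof.
  intros h h1 H M HM HO delta r t Hd Hr Ht.
  set (F := fun u => RInt (w h h1 r) (-1) u).
  assert (F0 : F (-1) = 0) by (unfold F; rewrite RInt_point; reflexivity).
  assert (Fev : F 1 = 2 * F 0).
  { unfold F. rewrite <- (chasles h h1 r (-1) 0 1). rewrite <- RInt_even. unfold F. lra. }
  assert (Fmono : forall a b, -1 <= a -> a <= b -> b <= 1 -> F a <= F b).
  { intros a b Ha Hab Hb. unfold F. rewrite <- (chasles h h1 r (-1) a b).
    pose proof (RInt_bounds_le h h1 H M HM HO r a b Hr Ha Hab Hb). lra. }
  assert (IV : forall y, 0 <= y <= F 1 -> exists m, -1 <= m <= 1 /\ F m = y).
  { intros y Hy. destruct (IVT_gen F (-1) 1 y (F_cont h h1 r)) as [m [Hm Hm2]].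
    - rewrite F0, Rmin_left, Rmax_right by lra. lra.
    - rewrite Rmin_left, Rmax_right in Hm by lra. exists m. auto. }
  assert (Hm1 : forall a, -1 <= a <= 1 -> RInt (w h h1 r) a 1 = F 1 - F a).
  { intros a Ha. unfold F. rewrite <- (chasles h h1 r (-1) a 1). unfold F. lra. }
  destruct (Rle_lt_dec t 0).
  - destruct (IV ((1 + delta) * F t)) as [m [Hm Hmv]].
    { pose proof (Fmono (-1) t ltac:(lra) ltac:(lra) ltac:(lra)).
      pose proof (Fmono t 0 ltac:(lra) ltac:(lra) ltac:(lra)). split; nra. }
    exists m. split; [exact Hm|]. split.
    + intros _. rewrite !Rint_RInt by lra. unfold F in Hmv. lra.
    + intros Ht0. assert (t = 0) by lra. subst t.
      rewrite !Rint_RInt by lra. rewrite Hm1 by lra. rewrite Hm1 by lra.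
      rewrite Hmv. rewrite Fev. nra.
  - destruct (IV (F 1 - (1 - delta) * (F 1 - F t))) as [m [Hm Hmv]].
    { pose proof (Fmono 0 t ltac:(lra) ltac:(lra) ltac:(lra)).
      pose proof (Fmono t 1 ltac:(lra) ltac:(lra) ltac:(lra)). split; nra. }
    exists m. split; [exact Hm|]. split.
    + intros; lra.
    + intros _. rewrite !Rint_RInt by lra. rewrite !Hm1 by lra. rewrite Hmv. lra.
Qed.

Lemma g_spec : forall h h1, HH h h1 -> forall M, 0 <= M ->
  (forall r, 0 < r < 1/2 -> (h1 r) ^ 2 <= M * (r + h r) ^ 3) ->
  forall delta r t, -1 < delta < 1 -> 0 < r < 1/2 -> -1 <= t <= 1 ->
  gspec h h1 delta r t (g h h1 delta r t).
Proof.
  intros. unfold g. apply (epsilon_spec (inhabits 0) (fun m => gspec h h1 delta r t m)).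
  eapply g_exists; eauto.
Qed.

Lemma radius_exists : forall h h1, HH h h1 -> forall x1 x2,
  0 <= x1 <= 1 -> 0 <= x2 < 1/2 -> ~ (x1 = 1/2 /\ x2 = 0) ->
  exists r, 0 < r < 1/2 /\ (x1 - 1/2)^2 + (x2 + h r)^2 = (r + h r)^2.
Proof.
  intros h h1 H x1 x2 Hx1 Hx2 Hn.
  set (D := (x1 - 1/2)^2 + x2^2).
  assert (HD : 0 < D).
  { unfold D. destruct (Req_dec x2 0) as [E|E].
    - assert (x1 - 1/2 <> 0) by (intro; apply Hn; split; lra).
      pose proof (pow2_gt_0 _ H0). rewrite E. lra.
    - pose proof (pow2_gt_0 _ E). pose proof (pow2_ge_0 (x1 - 1/2)). lra. }
  assert (HD2 : D <= 1/2).
  { unfold D. assert ((x1 - 1/2)^2 <= 1/4) by nra. assert (x2^2 <= 1/4) by nra. lra. }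
  set (r1 := Rmin (1/10) (D/2)).
  assert (Hr1a : r1 <= 1/10) by apply Rmin_l.
  assert (Hr1b : r1 <= D/2) by apply Rmin_r.
  assert (Hr1c : 0 < r1) by (apply Rmin_pos; lra).
  set (g0 := (1/2 - x2)/2).
  assert (Hg0 : 0 < g0) by (unfold g0; lra).
  destruct (Hinf _ _ H (D / (2 * g0))) as [eps [He Hinfe]].
  set (r2 := Rmax (Rmax ((1/2 + x2)/2) (1/2 - eps/2)) (1/5)).
  assert (Hr2a : (1/2 + x2)/2 <= r2) by (unfold r2; eapply Rle_trans; [apply Rmax_l| apply Rmax_l]).
  assert (Hr2b : 1/2 - eps/2 <= r2) by (unfold r2; eapply Rle_trans; [apply Rmax_r| apply Rmax_l]).
  assert (Hr2c : 1/5 <= r2) by (unfold r2; apply Rmax_r).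
  assert (Hr2d : r2 < 1/2).
  { unfold r2. apply Rmax_lub_lt; [apply Rmax_lub_lt|]; lra. }
  assert (Hh2 : D / (2 * g0) < h r2) by (apply Hinfe; lra).
  destruct (Ranalysis5.IVT_interv
    (fun r => - ((x1 - 1/2)^2 + x2^2 - r^2 - 2 * h r * (r - x2))) r1 r2) as [r [Hr Hr0]].
  - intros a Ha. apply cont_of_ex_derive. auto_derive.
    apply (h_ex_derive h h1 H); lra.
  - lra.
  - rewrite (Hzero _ _ H) by lra. fold D.
    assert (r1 * r1 <= D/2 * (D/2)) by (apply Rmult_le_compat; lra). nra.
  - fold D.
    assert (D = 2 * (D / (2 * g0)) * g0) by (field; lra).
    assert (r2 - x2 >= g0) by (unfold g0; lra).
    assert (0 <= D / (2 * g0)) by (apply Rdiv_le_0_compat; lra).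
    assert (D < 2 * h r2 * (r2 - x2)).
    { rewrite H0. assert (D / (2 * g0) * g0 < h r2 * (r2 - x2)).
      { apply Rle_lt_trans with (D / (2 * g0) * (r2 - x2)). apply Rmult_le_compat_l; lra.
        apply Rmult_lt_compat_r; lra. }
      lra. }
    nra.
  - exists r. split; [lra|]. nra.
Qed.

Lemma K_exists : forall h h1, HH h h1 -> forall x1 x2,
  0 <= x1 <= 1 -> 0 <= x2 < 1/2 -> ~ (x1 = 1/2 /\ x2 = 0) ->
  exists p, 0 < fst p < 1/2 /\ -1 <= snd p <= 1 /\ Phi h p = (x1, x2).
Proof.
  intros h h1 H x1 x2 Hx1 Hx2 Hn.
  destruct (radius_exists h h1 H x1 x2 Hx1 Hx2 Hn) as [r [Hr Heq]].
  pose proof (Hnonneg _ _ H r ltac:(lra)) as Hh.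
  set (p := r + h r) in *.
  assert (Hp : 0 < p) by (unfold p; lra).
  set (a := x1 - 1/2) in *.
  set (y := a / p).
  assert (Hy : -1 <= y <= 1).
  { unfold y. assert (a^2 <= p^2) by nra.
    split; [apply Rmult_le_reg_r with p; [lra|]; field_simplify; [nra|lra]
           |apply Rmult_le_reg_r with p; [lra|]; field_simplify; [nra|lra]]. }
  set (al := asin y).
  assert (Hsal : sin al = y) by (apply sin_asin; exact Hy).
  assert (Hcal : cos al = (x2 + h r) / p).
  { unfold al. rewrite cos_asin by exact Hy.
    replace (1 - y²) with (((x2 + h r) / p)^2).
    apply sqrt_pow2. apply Rdiv_le_0_compat; lra.
    unfold y, Rsqr. assert (E2 : (x2 + h r)^2 = p^2 - a^2) by lra. field_simplify_eq; [|lra]. nra. }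
  pose proof (asin_bound y) as Hab. fold al in Hab.
  pose proof (Theta_bounds h h1 H r Hr) as [T1 T2].
  assert (Hal : Rabs al <= Theta h r).
  { destruct (Rle_lt_dec r (r0 h)) as [Hle|Hgt].
    - destruct (Theta_le_case h h1 H r Hr Hle) as (_ & Hc & _). fold p in Hc.
      assert (HcT : cos (Theta h r) = h r / p) by (apply Rmult_eq_reg_l with p; [|lra]; rewrite Hc; field; lra).
      destruct (Rle_lt_dec (Rabs al) (Theta h r)) as [|Hlt]; [assumption|exfalso].
      assert (cos (Rabs al) < cos (Theta h r)).
      { assert (0 <= Rabs al) by apply Rabs_pos.
        assert (Rabs al <= PI/2) by (unfold Rabs; destruct Rcase_abs; lra).
        pose proof PI_RGT_0.
        apply cos_decreasing_1; lra. }
      assert (cos (Rabs al) = cos al) by (unfold Rabs; destruct Rcase_abs; [apply cos_neg|reflexivity]).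
      assert (h r / p <= (x2 + h r) / p) by (apply Rmult_le_compat_r; [apply Rlt_le, Rinv_0_lt_compat|]; lra).
      lra.
    - destruct (Theta_gt_case h h1 H r ltac:(lra)) as (_ & Hs & _). fold p in Hs.
      assert (HsT : sin (Theta h r) = 1 / (2 * p)) by (apply Rmult_eq_reg_l with p; [|lra]; rewrite Hs; field; lra).
      assert (Hy2 : Rabs y <= 1 / (2 * p)).
      { unfold y. unfold Rdiv. rewrite Rabs_mult. rewrite (Rabs_right (/ p)) by (apply Rle_ge, Rlt_le, Rinv_0_lt_compat; lra).
        assert (Rabs a <= 1/2) by (unfold a; apply Rabs_le; lra).
        replace (1 * / (2 * p)) with (1/2 * / p) by (field; lra).
        apply Rmult_le_compat_r; [apply Rlt_le, Rinv_0_lt_compat; lra| lra]. }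
      destruct (Rle_lt_dec (Rabs al) (Theta h r)) as [|Hlt]; [assumption|exfalso].
      unfold Rabs in Hlt. destruct Rcase_abs in Hlt.
      + assert (sin al < sin (- Theta h r)) by (apply sin_increasing_1; lra).
        rewrite sin_neg in H0. apply Rabs_le_between in Hy2. lra.
      + assert (sin (Theta h r) < sin al) by (apply sin_increasing_1; lra).
        apply Rabs_le_between in Hy2. lra. }
  exists (r, al / Theta h r). cbn [fst snd]. split; [lra|]. split.
  - apply Rabs_le_between. unfold Rdiv. rewrite Rabs_mult.
    rewrite (Rabs_right (/ Theta h r)) by (apply Rle_ge, Rlt_le, Rinv_0_lt_compat; lra).
    apply Rmult_le_reg_r with (Theta h r); [lra|]. rewrite Rmult_assoc, Rinv_l by lra. lra.
  - unfold Phi. cbn [fst snd]. replace (al / Theta h r * Theta h r) with al by (field; lra).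
    fold p. rewrite Hsal, Hcal. unfold y, a. f_equal; field; lra.
Qed.

Lemma K_spec : forall h h1, HH h h1 -> forall x1 x2,
  0 <= x1 <= 1 -> 0 <= x2 < 1/2 -> ~ (x1 = 1/2 /\ x2 = 0) ->
  0 < fst (K h (x1,x2)) < 1/2 /\ -1 <= snd (K h (x1,x2)) <= 1 /\ Phi h (K h (x1,x2)) = (x1, x2).
Proof.
  intros. unfold K.
  apply (epsilon_spec (inhabits (0,0)) (fun p => 0 < fst p < 1/2 /\ -1 <= snd p <= 1 /\ Phi h p = (x1,x2))).
  eapply K_exists; eauto.
Qed.

Lemma Cc_pos : forall h h1, HH h h1 -> 0 < Cc h.
Proof. intros. pose proof (Bc_pos h h1 H). pose proof (C1_pos h h1 H). unfold Cc. lra. Qed.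

Lemma lower_main : forall h h1, HH h h1 -> forall M, 0 <= M ->
  (forall r, 0 < r < 1/2 -> (h1 r) ^ 2 <= M * (r + h r) ^ 3) ->
  forall delta, -1 < delta < 1 -> forall x1 x2, 0 <= x1 <= 1 -> 0 <= x2 < 1/2 ->
  dist2 (PsiL h h1 delta (x1,x2)) (x1,x2) <= Wc h M * Cc h * Rabs delta * dcorner (x1,x2).
Proof.
  intros h h1 H M HM HO delta Hd x1 x2 Hx1 Hx2.
  pose proof (Wc_pos h h1 H M HM) as HW. pose proof (Cc_pos h h1 H) as HC.
  pose proof (dcorner_nonneg (x1,x2)) as Hdc.
  assert (Hgen : ~ (x1 = 1/2 /\ x2 = 0) ->
    dist2 (Phi h (fst (K h (x1,x2)), g h h1 delta (fst (K h (x1,x2))) (snd (K h (x1,x2))))) (x1,x2)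
      <= Wc h M * Cc h * Rabs delta * dcorner (x1,x2)).
  { intros Hn.
    destruct (K_spec h h1 H x1 x2 Hx1 Hx2 Hn) as [Hr [Ht HP]].
    set (r := fst (K h (x1,x2))) in *. set (t := snd (K h (x1,x2))) in *.
    assert (HP' : Phi h (r,t) = (x1,x2)).
    { rewrite <- HP. unfold r, t. rewrite <- surjective_pairing. reflexivity. }
    pose proof (g_spec h h1 H M HM HO delta r t Hd Hr Ht) as Hg.
    set (m := g h h1 delta r t) in *.
    pose proof (g_step h h1 H M HM HO delta r t m Hr Ht Hg) as Hs.
    pose proof (Hnonneg _ _ H r ltac:(lra)) as Hh.
    pose proof (Theta_bounds h h1 H r Hr) as [T1 T2].
    pose proof (dist_Phi_same_r h r m t ltac:(lra) ltac:(lra)) as HD.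
    rewrite HP' in HD.
    pose proof (corner_bound_sym h h1 H r t Hr Ht) as HCB. rewrite HP' in HCB.
    eapply Rle_trans; [exact HD|].
    assert (0 <= (r + h r) * Theta h r) by (apply Rmult_le_pos; lra).
    eapply Rle_trans. { apply Rmult_le_compat_l; [assumption| exact Hs]. }
    assert (0 <= Rabs delta) by apply Rabs_pos.
    replace ((r + h r) * Theta h r * (Rabs delta * Wc h M * (1 - Rabs t)))
      with (Rabs delta * Wc h M * ((r + h r) * Theta h r * (1 - Rabs t))) by ring.
    replace (Wc h M * Cc h * Rabs delta * dcorner (x1, x2))
      with (Rabs delta * Wc h M * (Cc h * dcorner (x1, x2))) by ring.
    apply Rmult_le_compat_l; [apply Rmult_le_pos; lra| exact HCB]. }
  unfold PsiL. cbn [fst snd].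
  destruct (Req_EM_T x1 (1/2)) as [E1|E1].
  - destruct (Req_EM_T x2 0) as [E2|E2].
    + subst. unfold dist2. cbn [fst snd].
      replace ((1/2 - 1/2)^2 + (0 - 0)^2) with 0 by ring. rewrite sqrt_0.
      apply Rmult_le_pos; [apply Rmult_le_pos; [apply Rmult_le_pos; lra | apply Rabs_pos] | lra].
    + apply Hgen. intros [_ E]. contradiction.
  - apply Hgen. intros [E _]. contradiction.
Qed.

Theorem proposition2p6 (h h1 h2 h3 : R -> R)
  (Hnonneg : forall r, 0 <= r < 1/2 -> 0 <= h r)
  (Hmono : forall r s, 0 <= r -> r <= s -> s < 1/2 -> h r <= h s)
  (Hzero : forall r, 0 <= r <= 1/10 -> h r = 0)
  (Hinf : forall M, exists eps, 0 < eps /\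
            forall r, 1/2 - eps < r < 1/2 -> M < h r)
  (Hd1 : forall r, 0 < r < 1/2 -> derivable_pt_lim h r (h1 r))
  (Hd2 : forall r, 0 < r < 1/2 -> derivable_pt_lim h1 r (h2 r))
  (Hd3 : forall r, 0 < r < 1/2 -> derivable_pt_lim h2 r (h3 r))
  (Hc3 : forall r, 0 < r < 1/2 -> continuity_pt h3 r)
  (HO1 : exists M, forall r, 0 < r < 1/2 -> (h1 r) ^ 2 <= M * (r + h r) ^ 3)
  (HO2 : exists M, forall r, 0 < r < 1/2 ->
            Rabs (h2 r * h1 r) <= M * (r + h r) ^ 3)
  (HO3 : exists M, forall r, 0 < r < 1/2 -> Rabs (h3 r) <= M * (r + h r) ^ 2) :
  exists C, 0 < C /\
    forall delta, -1 < delta < 1 ->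
    forall x1 x2, 0 <= x1 <= 1 -> 0 <= x2 <= 1 ->
      dist2 (Psi h h1 delta (x1, x2)) (x1, x2)
        <= C * Rabs delta * dcorner (x1, x2).
Proof.
  assert (H : HH h h1) by (constructor; assumption).
  destruct HO1 as [M0 HM0].
  set (M := Rabs M0).
  assert (HM : 0 <= M) by apply Rabs_pos.
  assert (HO : forall r, 0 < r < 1/2 -> (h1 r) ^ 2 <= M * (r + h r) ^ 3).
  { intros r Hr. eapply Rle_trans; [apply HM0; exact Hr|].
    apply Rmult_le_compat_r. apply pow_le. pose proof (Hnonneg r ltac:(lra)). lra.
    apply Rle_abs. }
  pose proof (Wc_pos h h1 H M HM) as HW. pose proof (Cc_pos h h1 H) as HC.
  exists (Wc h M * Cc h + 1). split.
  { assert (0 < Wc h M * Cc h) by (apply Rmult_lt_0_compat; lra). lra. }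
  intros delta Hd x1 x2 Hx1 Hx2.
  pose proof (dcorner_nonneg (x1,x2)) as Hdc.
  assert (0 <= Rabs delta) by apply Rabs_pos.
  assert (HWC : 0 <= Wc h M * Cc h) by (apply Rmult_le_pos; lra).
  unfold Psi. cbn [fst snd].
  destruct (Req_EM_T x2 (1/2)) as [E|E].
  - subst x2.
    assert (Hdq : 1/2 <= dcorner (x1, 1/2)).
    { apply dcorner_ge; apply dist2_ge; cbn [fst snd];
      pose proof (pow2_ge_0 (x1 - 0)); pose proof (pow2_ge_0 (x1 - 1)); nra. }
    assert (Hb : forall z, Rabs z <= Rabs delta / 2 ->
                dist2 (x1 + z, 1/2) (x1, 1/2) <= (Wc h M * Cc h + 1) * Rabs delta * dcorner (x1, 1/2)).
    { intros z Hz. apply dist2_le.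
      - apply Rmult_le_pos; [apply Rmult_le_pos|]; lra.
      - cbn [fst snd]. replace (x1 + z - x1) with z by ring. replace (1/2 - 1/2) with 0 by ring.
        assert (Rabs z <= (Wc h M * Cc h + 1) * Rabs delta * dcorner (x1, 1 / 2)).
        { eapply Rle_trans; [exact Hz|].
          assert (Rabs delta * (1/2) <= Rabs delta * dcorner (x1, 1/2)) by (apply Rmult_le_compat_l; lra).
          assert (0 <= Wc h M * Cc h * (Rabs delta * dcorner (x1, 1/2))) by (apply Rmult_le_pos; [lra| apply Rmult_le_pos; lra]).
          nra. }
        pose proof (Rabs_pos z).
        replace (z^2 + 0^2) with ((Rabs z)^2) by (rewrite pow2_abs; ring).
        apply pow_incr. lra. }
    destruct (Rle_dec x1 (1/2)).
    + replace ((1 + delta) * x1) with (x1 + delta * x1) by ring. apply Hb.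
      rewrite Rabs_mult. rewrite (Rabs_right x1) by lra.
      apply Rle_trans with (Rabs delta * (1/2)); [apply Rmult_le_compat_l; lra| lra].
    + replace ((1 + delta) / 2 + (1 - delta) * (x1 - 1 / 2)) with (x1 + delta * (1 - x1)) by field.
      apply Hb. rewrite Rabs_mult. rewrite (Rabs_right (1 - x1)) by lra.
      apply Rle_trans with (Rabs delta * (1/2)); [apply Rmult_le_compat_l; lra| lra].
  - destruct (Rlt_dec (1/2) x2) as [Hlt|Hge].
    + pose proof (lower_main h h1 H M HM HO delta Hd x1 (1 - x2) Hx1 ltac:(lra)) as HL.
      rewrite dcorner_flip2 in HL.
      replace (dist2 (fst (PsiL h h1 delta (x1, 1 - x2)), 1 - snd (PsiL h h1 delta (x1, 1 - x2))) (x1, x2))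
        with (dist2 (PsiL h h1 delta (x1, 1 - x2)) (x1, 1 - x2)).
      2:{ unfold dist2. cbn [fst snd]. f_equal. ring. }
      eapply Rle_trans; [exact HL|].
      assert (0 <= Rabs delta * dcorner (x1, x2)) by (apply Rmult_le_pos; lra). nra.
    + pose proof (lower_main h h1 H M HM HO delta Hd x1 x2 Hx1 ltac:(lra)) as HL.
      eapply Rle_trans; [exact HL|].
      assert (0 <= Rabs delta * dcorner (x1, x2)) by (apply Rmult_le_pos; lra). nra.
Qed.
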